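(* Let $G$ be a finite group and $p$ a prime. If $G$ contains a central nonidentity $p$-subgroup, then $\chi(\mathcal F^*_G)=1$ and $\chi(\mathcal L^*_G)=|G:O^pG|^{-1}$.
   Context: $N_G(H,K)=\{g\in G: g^{-1}Hg\le K\}$; $O^p(X)$ is the smallest normal subgroup of $X$ with $p$-group quotient. $\mathcal F^*_G$ and $\mathcal L^*_G$ have as objects the nonidentity $p$-subgroups of $G$, with $\mathcal F^*_G(H,K)=C_G(H)\backslash N_G(H,K)$ and $\mathcal L^*_G(H,K)=O^p(C_G(H))\backslash N_G(H,K)$, composition induced by multiplication. $\chi$ is Leinster's Euler characteristic: for a finite category $\mathcal C$, a weighting is $k^\bullet$ with $\sum_b|\mathcal C(a,b)|k^b=1$ for all $a$, a coweighting is $k_\bullet$ with $\sum_ak_a|\mathcal C(a,b)|=1$ for all $b$, and if both exist $\chi(\mathcal C)=\sum_bk^b=\sum_ak_a$. *)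

(* Defs.v *)
From HB Require Import structures.
From mathcomp Require Import all_boot all_order all_algebra all_fingroup all_solvable.
Set Implicit Arguments. Unset Strict Implicit. Unset Printing Implicit Defensive.
Import GRing.Theory Num.Theory.
Local Open Scope group_scope.

(* Leinster's Euler characteristic of a finite category, which only depends on
   the object set [Ob] and the cardinalities [hom a b] of the hom-sets. *)
Section Leinster.
Variables (O : finType) (Ob : {set O}) (hom : O -> O -> nat).

Definition is_weighting (k : O -> rat) : Prop :=
  forall a, a \in Ob -> (\sum_(b in Ob) (hom a b)%:R * k b = 1)%R.

Definition is_coweighting (k : O -> rat) : Prop :=
  forall b, b \in Ob -> (\sum_(a in Ob) k a * (hom a b)%:R = 1)%R.

Definition euler_char_is (x : rat) : Prop :=
  [/\ (exists k, is_weighting k), (exists k, is_coweighting k),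
      (forall k, is_weighting k -> (\sum_(b in Ob) k b)%R = x)
    & (forall k, is_coweighting k -> (\sum_(a in Ob) k a)%R = x)].
End Leinster.

Section Defs.
Variable gT : finGroupType.

Definition Oup (p : nat) (X : {set gT}) : {set gT} :=
  \bigcap_(N : {group gT} | (N <| X) && p.-group (X / N)) N.

Definition transporter (G H K : {set gT}) : {set gT} :=
  [set g in G | H :^ g \subset K].

Definition objs (p : nat) (G : {group gT}) : {set {group gT}} :=
  [set H : {group gT} | [&& H \subset G, p.-group H & H :!=: 1]].

Definition homF (G H K : {group gT}) : {set {set gT}} :=
  rcosets 'C_G(H) (transporter G H K).

Definition homL (p : nat) (G H K : {group gT}) : {set {set gT}} :=
  rcosets (Oup p 'C_G(H)) (transporter G H K).

End Defs.

(* Main.v *)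
Require Import Defs.
From HB Require Import structures.
From mathcomp Require Import all_boot all_order all_algebra all_fingroup all_solvable.
From mathcomp Require Import ring zify.
Import GRing.Theory Num.Theory.
Local Open Scope group_scope.

Section Gen.
Local Open Scope ring_scope.

Lemma euler_of (O : finType) (Ob : {set O}) (hom : O -> O -> nat) w v x :
  is_weighting Ob hom w -> is_coweighting Ob hom v ->
  \sum_(b in Ob) w b = x -> euler_char_is Ob hom x.
Proof.
have key : forall k v', is_weighting Ob hom k -> is_coweighting Ob hom v' ->
    \sum_(b in Ob) k b = \sum_(a in Ob) v' a.
  move=> k v' hk hv.
  transitivity (\sum_(a in Ob) v' a * \sum_(b in Ob) (hom a b)%:R * k b).
    under [RHS]eq_bigr do rewrite mulr_sumr.
    rewrite exchange_big /=; apply: eq_bigr => b Hb.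
    transitivity ((\sum_(a in Ob) v' a * (hom a b)%:R) * k b); first by rewrite hv // mul1r.
    by rewrite mulr_suml; apply: eq_bigr => a _; rewrite mulrA.
  by apply: eq_bigr => a Ha; rewrite hk // mulr1.
move=> hw hv hx; split; first by exists w.
- by exists v.
- by move=> k hk; rewrite (key k v) // -(key w v).
- by move=> k hk; rewrite -(key w k).
Qed.

Lemma tri_exists (T : finType) (r : rel T) (sz : T -> nat) (c : T -> rat) :
  (forall a, r a a) ->
  (forall a b, r a b -> a != b -> (sz a < sz b)%N) ->
  forall S : {set T}, exists k : T -> rat,
    forall a, a \in S -> \sum_(b in S | r a b) k b = c a.
Proof.
move=> rrefl rsz S.
elim: {S}_.+1 {-2}S (ltnSn #|S|) => // n IH S leS.
case: (set_0Vmem S) => [-> | [a0 Sa0]].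
  by exists (fun _ => 0) => a; rewrite inE.
case: (arg_minnP sz Sa0) => a Sa amin.
have {}Sa : a \in S := Sa.
have [|k' hk'] := IH (S :\ a).
  by move: leS; rewrite (cardsD1 a S) Sa add1n ltnS.
exists (fun b => if b == a then c a - \sum_(b in S :\ a | r a b) k' b else k' b).
move=> a' Sa'.
have E : forall a'', \sum_(b | (b \in S) && r a'' b && (b != a))
   (if b == a then c a - \sum_(b0 in S :\ a | r a b0) k' b0 else k' b)
   = \sum_(b in S :\ a | r a'' b) k' b.
  move=> a''; apply: eq_big => [b|b /andP[_ /negbTE->]] //.
  by rewrite !inE; case: (b \in S); case: (r a'' b); case: (b != a).
case: (eqVneq a' a) => [->|na].
  by rewrite (bigD1 a) /= ?Sa ?rrefl // eqxx E addrNK.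
rewrite -(hk' a'); last by rewrite !inE na.
have nra : forall b, r a' b -> b != a.
  move=> b ra; apply/eqP => eba; move: ra; rewrite eba => ra.
  by have := rsz _ _ ra na; rewrite ltnNge amin.
apply: eq_big => [b|b /andP[_ /nra /negbTE->]] //.
by rewrite !inE; case: (r a' b) (nra b) => [->|]; rewrite ?andbF.
Qed.
End Gen.

Section Grp.
Variable gT : finGroupType.
Implicit Types (G H K X N : {group gT}).

Lemma card_rcosets_set (C : {group gT}) (A : {set gT}) :
  C * A \subset A -> (#|rcosets C A| * #|C|)%N = #|A|.
Proof.
move=> sCA.
have eCA : C * A = A by apply/eqP; rewrite eqEsubset sCA mulG_subr.
have part : partition (rcosets C A) (C * A).
  set HG := C * A; have sGHG: {subset A <= HG} by apply/subsetP/mulG_subr.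
  have defHx x: x \in HG -> [set y in HG | rcoset C x == rcoset C y] = C :* x.
    move=> HGx; apply/setP=> y; rewrite inE !rcosetE (sameP eqP rcoset_eqP).
    by rewrite rcoset_sym; apply/andb_idl/subsetP; rewrite mulGS sub1set.
  have:= preim_partitionP (rcoset C) HG; congr (partition _ _); apply/setP=> Hx.
  apply/imsetP/idP=> [[x HGx ->] | ]; first by rewrite defHx // mem_rcosets.
  by case/rcosetsP=> x /sGHG-HGx ->; exists x; rewrite ?defHx.
rewrite -{2}eCA (card_uniform_partition (n:=#|C|) _ part) //.
by move=> _ /rcosetsP[x _ ->]; rewrite card_rcoset.
Qed.

Lemma transp_mul G H K (C : {group gT}) : C \subset 'C_G(H) ->
  C * transporter G H K \subset transporter G H K.
Proof.
move=> sC; apply/subsetP => _ /mulsgP[c t Cc Tt ->].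
have /setIP[Gc cHc] := subsetP sC c Cc.
move: Tt; rewrite !inE => /andP[Gt sHt]; rewrite (groupM Gc Gt) /=.
rewrite conjsgM; have /normP -> // := subsetP (cent_sub H) c cHc.
Qed.

Lemma card_transp G H K :
  #|transporter G H K| = (\sum_(g in G) (H :^ g \subset K))%N.
Proof.
rewrite /transporter -sum1dep_card big_mkcond /= [RHS]big_mkcond; apply: eq_bigr => g _.
by case: (g \in G); case: (H :^ g \subset K).
Qed.

End Grp.

Section Main.
Variable gT : finGroupType.
Implicit Types (G H K X N : {group gT}).
Variables (p : nat) (G Z : {group gT}).
Hypotheses (hZ : Z \subset 'Z(G)) (pZ : p.-group Z) (ntZ : Z :!=: 1).
Variables (s : {group gT} -> nat) (hom : {group gT} -> {group gT} -> nat).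
Hypothesis homE : forall H K, (hom H K * s H)%N = #|transporter G H K|.
Hypothesis spos : forall H, (0 < s H)%N.
Hypothesis sJ : forall H g, g \in G -> s (H :^ g)%G = s H.
Hypothesis sZ : forall H, s (H <*> Z)%G = s H.

Lemma ZsubG : Z \subset G.
Proof. exact: subset_trans hZ (center_sub G). Qed.

Lemma GcZ : G \subset 'C(Z).
Proof.
rewrite centsC; apply: subset_trans hZ _.
by rewrite /center subsetIr.
Qed.

Lemma objJ H g : H \in objs p G -> g \in G -> (H :^ g)%G \in objs p G.
Proof.
rewrite !inE /= => /and3P[sHG pH ntH] Gg.
by rewrite -{1}(conjGid Gg) conjSg sHG pgroupJ pH conjsg_eq1 ntH.
Qed.

Lemma objZ H : H \in objs p G -> (H <*> Z)%G \in objs p G.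
Proof.
rewrite !inE /= => /and3P[sHG pH ntH].
rewrite join_subG sHG ZsubG /= cent_joinEr; last first.
  by rewrite centsC (subset_trans sHG GcZ).
rewrite pgroupM pH pZ /=; apply: contra ntZ => /eqP e.
by rewrite -subG1 -e mulG_subr.
Qed.

Lemma Zobj : Z \in objs p G.
Proof. by rewrite inE ZsubG pZ ntZ. Qed.

Local Open Scope ring_scope.

Lemma homR H K : (hom H K)%:R =
  (s H)%:R^-1 * \sum_(g in G) ((H :^ g \subset K) : nat)%:R :> rat.
Proof.
have := homE H K; rewrite card_transp => /(congr1 (fun n => n%:R : rat)).
rewrite natrM natr_sum => <-; rewrite mulrC mulrK //.
by rewrite unitfE pnatr_eq0 -lt0n spos.
Qed.

Lemma GR : (#|G|%:R : rat) != 0.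
Proof. by rewrite pnatr_eq0 -lt0n cardG_gt0. Qed.

Lemma sR H : ((s H)%:R : rat) != 0.
Proof. by rewrite pnatr_eq0 -lt0n spos. Qed.

Lemma main_euler : euler_char_is (objs p G) hom ((s Z)%:R / #|G|%:R).
Proof.
pose objsZ := [set K in objs p G | Z \subset K].
have rsz : forall a b : {group gT}, (a : {set gT}) \subset b -> a != b -> (#|a| < #|b|)%N.
  move=> a b sab nab; apply: proper_card; rewrite properEneq sab andbT.
  by apply: contra nab => /eqP e; apply/eqP/val_inj.
have [k hk] := @tri_exists {group gT} (fun a b => (a : {set gT}) \subset b)
  (fun a => #|a|) (fun a => (s a)%:R / #|G|%:R) (fun a => subxx _) rsz objsZ.
pose w K := if Z \subset K then k K else 0.
have hw : is_weighting (objs p G) hom w.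
  move=> H oH.
  under eq_bigr do rewrite homR -mulrA mulr_suml.
  rewrite -mulr_sumr exchange_big /=.
  rewrite (eq_bigr (fun _ => (s H)%:R / #|G|%:R)); last first.
    move=> g Gg.
    have oHg := @objJ H g oH Gg.
    have oHZ := @objZ _ oHg.
    have oHZ' : (H :^ g <*> Z)%G \in objsZ by rewrite inE oHZ joing_subr.
    rewrite -(@sJ H g Gg) -sZ -(hk _ oHZ') big_mkcond [RHS]big_mkcond /=.
    apply: eq_bigr => K _; rewrite [K \in objsZ]inE join_subG /w.
    case: (K \in objs p G); case: (H :^ g \subset K); case: (Z \subset K);
      by rewrite /= ?mul1r ?mul0r.
  rewrite sumr_const -mulr_natr; field.
  by rewrite GR sR.
have sw : \sum_(K in objs p G) w K = (s Z)%:R / #|G|%:R.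
  have oZ' : Z \in objsZ by rewrite inE Zobj subxx.
  rewrite -(hk _ oZ') big_mkcond [RHS]big_mkcond /=.
  apply: eq_bigr => K _; rewrite [K \in objsZ]inE /w.
  by case: (K \in objs p G); case: (Z \subset K).
have rsz2 : forall a b : {group gT}, (b : {set gT}) \subset a -> a != b ->
    (#|gT| - #|a| < #|gT| - #|b|)%N.
  move=> a b sba nab; rewrite eq_sym in nab; have lt := rsz _ _ sba nab.
  by apply: ltn_sub2l => //; apply: leq_trans lt (max_card _).
have [m hm] := @tri_exists {group gT} (fun a b => (b : {set gT}) \subset a)
  (fun a => #|gT| - #|a|)%N (fun _ => 1) (fun a => subxx _) rsz2 (objs p G).
pose v H := (s H)%:R / #|G|%:R * m H.
have hv : is_coweighting (objs p G) hom v.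
  move=> K oK.
  rewrite (eq_bigr (fun H => #|G|%:R^-1 * \sum_(g in G) (H :^ g \subset K)%:R * m H));
    last first.
    move=> H _; rewrite /v homR -mulr_suml; field.
    by rewrite GR sR.
  rewrite -mulr_sumr exchange_big /=.
  rewrite (eq_bigr (fun _ => 1)); last first.
    move=> g Gg.
    have oK' := @objJ K (g^-1)%g oK (groupVr Gg).
    rewrite -[RHS](hm _ oK') big_mkcond [RHS]big_mkcond /=.
    apply: eq_bigr => H _; rewrite sub_conjg.
    by case: (H \in objs p G); case: (H \subset K :^ (g^-1)%g); rewrite /= ?mul1r ?mul0r.
  rewrite sumr_const -mulr_natr; field.
  by rewrite GR.
exact: euler_of hw hv sw.
Qed.


End Main.

Section Oupsec.
Variable gT : finGroupType.
Implicit Types (G H K X N : {group gT}).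

Lemma Oup_group p X : group_set (Oup p X).
Proof. exact: group_set_bigcap. Qed.

Canonical OupG p X := Group (Oup_group p X).

Lemma Oup_sub p X : Oup p X \subset X.
Proof.
apply: (@bigcap_inf _ _ X).
by rewrite normal_refl trivg_quotient pgroup1.
Qed.

Lemma condJ p X N g :
  ((N :^ g) <| (X :^ g)) && p.-group ((X :^ g) / (N :^ g)) =
  (N <| X) && p.-group (X / N).
Proof.
rewrite normalJ; case nNX: (N <| X) => //=.
have nNX' : (N :^ g) <| (X :^ g) by rewrite normalJ.
rewrite !pgroupE card_quotient ?(normal_norm nNX') //.
by rewrite card_quotient ?(normal_norm nNX) // indexJg.
Qed.

Lemma OupJ p X g : Oup p (X :^ g) = Oup p X :^ g.
Proof.
apply/setP => x; rewrite mem_conjg; apply/bigcapP/bigcapP => hx N cN.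
  by have := hx (N :^ g)%G; rewrite condJ => /(_ cN); rewrite mem_conjg.
have := hx (N :^ g^-1)%G.
have := condJ p (X :^ g)%G N g^-1; rewrite /= conjsgK => ->.
by move=> /(_ cN); rewrite memJ_conjg.
Qed.
End Oupsec.

Theorem proposition5p1 (gT : finGroupType) (G : {group gT}) (p : nat) :
  prime p ->
  (exists Z : {group gT}, [&& Z \subset 'Z(G), p.-group Z & Z :!=: 1]) ->
  euler_char_is (objs p G) (fun H K => #|homF G H K|) 1%R /\
  euler_char_is (objs p G) (fun H K => #|homL p G H K|)
    ((#|G : Oup p G|)%:R^-1)%R.
Proof.
move=> pp [Z /and3P[hZ pZ ntZ]].
have CJ : forall (H : {group gT}) g, g \in G -> 'C_G(H :^ g) = 'C_G(H) :^ g.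
  by move=> H g Gg; rewrite centJ -{1}(conjGid Gg) -conjIg.
have CZ : forall H : {group gT}, 'C_G(H <*> Z) = 'C_G(H).
  move=> H; rewrite centY setIA; apply/setIidPl.
  exact: subset_trans (subsetIl _ _) (@GcZ _ G Z hZ).
have CZ1 : 'C_G(Z) = G by apply/setIidPl; exact: (@GcZ _ G Z hZ).
have GR : (#|G|%:R : rat) != 0%R by rewrite pnatr_eq0 -lt0n cardG_gt0.
split.
  have := @main_euler gT p G Z hZ pZ ntZ (fun H => #|'C_G(H)|)
    (fun H K => #|homF G H K|).
  rewrite /= CZ1 divff //; apply.
  - move=> H K; apply: (@card_rcosets_set _ 'C_G(H)%G).
    exact: transp_mul.
  - by move=> H; exact: cardG_gt0.
  - by move=> H g Gg; rewrite /= CJ // cardJg.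
  - by move=> H; rewrite /= CZ.
have := @main_euler gT p G Z hZ pZ ntZ (fun H => #|Oup p 'C_G(H)|)
  (fun H K => #|homL p G H K|).
have -> : ((#|Oup p 'C_G(Z)|)%:R / #|G|%:R = (#|G : Oup p G|)%:R^-1 :> rat)%R.
  rewrite CZ1 -(Lagrange (@Oup_sub _ p G)) natrM.
  have : (#|Oup p G|%:R : rat) != 0%R by rewrite pnatr_eq0 -lt0n (cardG_gt0 (@OupG _ p G)).
  have : (#|G : Oup p G|%:R : rat) != 0%R by rewrite pnatr_eq0 -lt0n indexg_gt0.
  move=> h1 h2; field.
  by rewrite h1 h2.
apply.
- move=> H K; apply: (@card_rcosets_set _ (@OupG _ p 'C_G(H)%G)).
  apply: transp_mul; exact: Oup_sub.
- by move=> H; exact: (cardG_gt0 (@OupG _ p _)).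
- by move=> H g Gg; rewrite /= CJ // (@OupJ _ p 'C_G(H)%G) cardJg.
- by move=> H; rewrite /= CZ.
Qed.
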